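(* Let $\iota:B\to A$ be a homomorphism of groups and let $q:A\to B$ satisfy (ZL1), (ZL2), (ZL3). Then $\mathrm{Ker}(q)=\{a\in A: q(a)=1_B\}$ is a complement to $\iota(B)$ in $A$, i.e. $\mathrm{Ker}(q)$ is a subgroup of $A$ with $\iota(B)\cap\mathrm{Ker}(q)=\{1_A\}$ and $\iota(B)\,\mathrm{Ker}(q)=A$.
   Context: For a homomorphism $\iota:B\to A$, conditions on $q:A\to B$: (ZL1) $q(1_A)=1_B$; (ZL2) $q(\iota(b)a)=b\,q(a)$ for all $a\in A,b\in B$; (ZL3) $q(aa')=q(a\,\iota(q(a')))$ for all $a,a'\in A$. These maps constitute $\mathcal Z^1(\mathsf T^l_\iota,(B,m_B))$, the algebra structures on the left $B$-set $B$ for the monad $A\otimes_B-$ induced by $\iota$. For subgroups $U,V$ of $A$, $UV=\{uv:u\in U,v\in V\}$. *)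

(* Defs.v *)
Record Grp := MkGrp {
  carrier :> Type;
  gmul : carrier -> carrier -> carrier;
  gone : carrier;
  ginv : carrier -> carrier;
  gmulA : forall x y z, gmul x (gmul y z) = gmul (gmul x y) z;
  gmul1l : forall x, gmul gone x = x;
  gmul1r : forall x, gmul x gone = x;
  gmulVl : forall x, gmul (ginv x) x = gone;
  gmulVr : forall x, gmul x (ginv x) = gone
}.

Arguments gmul {g} _ _.
Arguments gone {g}.
Arguments ginv {g} _.

Definition is_hom (B A : Grp) (f : B -> A) : Prop :=
  forall x y : B, f (gmul x y) = gmul (f x) (f y).

Definition is_subgroup (A : Grp) (S : A -> Prop) : Prop :=
  S gone /\ (forall x y, S x -> S y -> S (gmul x y)) /\ (forall x, S x -> S (ginv x)).

Definition ZL1 (B A : Grp) (q : A -> B) : Prop := q gone = gone.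
Definition ZL2 (B A : Grp) (iota : B -> A) (q : A -> B) : Prop :=
  forall (a : A) (b : B), q (gmul (iota b) a) = gmul b (q a).
Definition ZL3 (B A : Grp) (iota : B -> A) (q : A -> B) : Prop :=
  forall a a' : A, q (gmul a a') = q (gmul a (iota (q a'))).

Definition Kerq (B A : Grp) (q : A -> B) : A -> Prop := fun a => q a = gone.

Definition img (B A : Grp) (iota : B -> A) : A -> Prop := fun a => exists b, iota b = a.

(* Main.v *)
Require Import Defs.

Lemma cancel_l (G : Grp) (x y z : G) : gmul x y = gmul x z -> y = z.
Proof.
  intro H. rewrite <- (gmul1l G y), <- (gmul1l G z), <- (gmulVl G x),
    <- !gmulA, H. reflexivity.
Qed.

Theorem proposition4p2 (A B : Grp) (iota : B -> A) (q : A -> B) :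
  is_hom B A iota ->
  ZL1 B A q -> ZL2 B A iota q -> ZL3 B A iota q ->
  is_subgroup A (Kerq B A q) /\
  (forall a : A, img B A iota a -> Kerq B A q a -> a = gone) /\
  (forall a : A, exists u v : A,
      img B A iota u /\ Kerq B A q v /\ a = gmul u v).
Proof.
  unfold is_hom, ZL1, ZL2, ZL3, is_subgroup, Kerq, img.
  intros Hh H1 H2 H3.
  assert (Hi1 : iota gone = gone).
  { apply (cancel_l A (iota gone)). rewrite <- Hh, !gmul1l, gmul1r. reflexivity. }
  assert (Hqi : forall b, q (iota b) = b).
  { intro b. rewrite <- (gmul1r A (iota b)), H2, H1, gmul1r. reflexivity. }
  assert (Hiv : forall b, iota (ginv b) = ginv (iota b)).
  { intro b. apply (cancel_l A (iota b)). rewrite <- Hh, !gmulVr. exact Hi1. }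
  split; [split; [exact H1 | split] | split].
  - intros x y Hx Hy. rewrite H3, Hy, Hi1, gmul1r. exact Hx.
  - intros x Hx. assert (E := H3 (ginv x) x). rewrite gmulVl, Hx, Hi1, gmul1r in E.
    rewrite <- E. exact H1.
  - intros a [b <-] Hb. rewrite Hqi in Hb. subst b. exact Hi1.
  - intro a. exists (iota (q a)), (gmul (iota (ginv (q a))) a).
    split; [eauto | split].
    + rewrite H2, gmulVl. reflexivity.
    + rewrite gmulA, <- Hh, gmulVr, Hi1, gmul1l. reflexivity.
Qed.
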